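(* If $x\in S_n$ avoids both $123$ and the bivincular pattern $132^{\star}$, then $x\in\mathrm{Sort}_n(132,321)$.
   Context: An occurrence of the bivincular pattern $132^{\star}$ in $x=x_1\cdots x_n$ is a pair of indices $a<b<n$ with $x_a<x_{b+1}$ and $x_b=x_{b+1}+1$. A permutation contains a classical pattern $p$ if it has a subsequence order-isomorphic to $p$. For a set $T$ of patterns, the map $s_T$ is defined as follows: the entries of the input permutation are read from left to right, with an initially empty stack. At each step, if the input is nonempty and pushing the next input entry onto the stack produces a stack whose contents, read from top to bottom, avoid every pattern in $T$, that entry is pushed; otherwise the top entry of the stack is popped and appended to the output. When the input is exhausted, the remaining stack entries are popped one at a time to the output. Write $s_{\sigma,\tau}=s_{\{\sigma,\tau\}}$ and $s=s_{\{21\}}$ (West's stack-sorting map). $\mathrm{Sort}_n(\sigma,\tau)$ is the set of $x\in S_n$ with $s(s_{\sigma,\tau}(x))=12\cdots n$. *)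

(* Defs.v *)
From mathcomp Require Import all_boot.
Set Implicit Arguments. Unset Strict Implicit. Unset Printing Implicit Defensive.

Definition order_iso (t p : seq nat) : bool :=
  (size t == size p) &&
  all (fun i => all (fun j => (nth 0 t i < nth 0 t j) == (nth 0 p i < nth 0 p j))
                    (iota 0 (size t))) (iota 0 (size t)).

Fixpoint allmasks (k : nat) : seq bitseq :=
  if k is k'.+1 then [seq b :: m | b <- [:: true; false], m <- allmasks k']
  else [:: [::]].

Definition contains (x p : seq nat) : bool :=
  has (fun m => order_iso (mask m x) p) (allmasks (size x)).

Definition avoids_all (T : seq (seq nat)) (x : seq nat) : bool :=
  all (fun p => ~~ contains x p) T.

(* One input step of s_T: the stack is a seq whose head is the top.
   Returns (new stack, new output). Pop while pushing a would create a stack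
   (read top to bottom) containing a pattern of T. *)
Fixpoint push_step (T : seq (seq nat)) (a : nat) (stk out : seq nat)
  : seq nat * seq nat :=
  if avoids_all T (a :: stk) then (a :: stk, out)
  else match stk with
       | [::] => (a :: stk, out)
       | b :: stk' => push_step T a stk' (rcons out b)
       end.

Definition sT (T : seq (seq nat)) (x : seq nat) : seq nat :=
  let '(stk, out) :=
    foldl (fun so a => push_step T a so.1 so.2) ([::], [::]) x in
  out ++ stk.

Definition west_s (x : seq nat) : seq nat := sT [:: [:: 2; 1]] x.

Definition is_perm (n : nat) (x : seq nat) : Prop := perm_eq x (iota 1 n).

Definition Sort_n (n : nat) (sigma tau : seq nat) (x : seq nat) : Prop :=
  is_perm n x /\ west_s (sT [:: sigma; tau] x) = iota 1 n.

(* occurrence of the bivincular pattern 132* (0-based indices):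
   a < b, b+1 < size x, x_a < x_{b+1}, x_b = x_{b+1} + 1 *)
Definition occ_132star (x : seq nat) (a b : nat) : Prop :=
  a < b /\ b.+1 < size x /\ nth 0 x a < nth 0 x b.+1 /\ nth 0 x b = (nth 0 x b.+1).+1.

Definition avoids_132star (x : seq nat) : Prop :=
  forall a b, ~ occ_132star x a b.

(* Main.v *)
Require Import Defs.
From mathcomp Require Import all_boot zify.
Set Implicit Arguments. Unset Strict Implicit. Unset Printing Implicit Defensive.

Lemma mem_allmasks k m : (m \in allmasks k) = (size m == k).
Proof.
elim: k m => [|k IH] [|b m] //=.
- by rewrite !mem_cat; apply/negP => /or3P [/mapP [] | /mapP [] | ].
- rewrite !mem_cat eqSS -IH; apply/idP/idP.
    by case/or3P => // /mapP [m' Hm' [_ ->]].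
  by move=> Hm; case: b; rewrite map_f ?orbT.
Qed.

Lemma containsP x p : reflect (exists w, subseq w x /\ order_iso w p) (contains x p).
Proof.
apply: (iffP hasP) => [[m Hm Hiso]|[w [Hsub Hiso]]].
  by exists (mask m x); split => //; apply: mask_subseq.
case/subseqP: Hsub => m Hsz Hw; exists m; last by rewrite -Hw.
by rewrite mem_allmasks Hsz.
Qed.

Lemma iso132 e1 e2 e3 : order_iso [:: e1;e2;e3] [:: 1;3;2] = (e1 < e3) && (e3 < e2).
Proof. rewrite /order_iso /= !ltnn /=. apply/idP/idP; lia. Qed.
Lemma iso321 e1 e2 e3 : order_iso [:: e1;e2;e3] [:: 3;2;1] = (e3 < e2) && (e2 < e1).
Proof. rewrite /order_iso /= !ltnn /=. apply/idP/idP; lia. Qed.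
Lemma iso123 e1 e2 e3 : order_iso [:: e1;e2;e3] [:: 1;2;3] = (e1 < e2) && (e2 < e3).
Proof. rewrite /order_iso /= !ltnn /=. apply/idP/idP; lia. Qed.
Lemma iso21 e1 e2 : order_iso [:: e1;e2] [:: 2;1] = (e2 < e1).
Proof. rewrite /order_iso /= !ltnn /=. apply/idP/idP; lia. Qed.

Lemma contains3P x p : size p = 3 ->
  reflect (exists e1 e2 e3, subseq [:: e1; e2; e3] x /\ order_iso [:: e1; e2; e3] p)
          (contains x p).
Proof.
move=> Hp; apply: (iffP (containsP x p)) => [[w [Hs Hi]]|[e1 [e2 [e3 H]]]]; last by exists [:: e1; e2; e3].
move: (Hi) => /andP [/eqP Hsz _]; rewrite Hp in Hsz.
case: w Hs Hi Hsz => [|e1 [|e2 [|e3 [|]]]] //= Hs Hi _.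
by exists e1, e2, e3.
Qed.

Lemma contains2P x p : size p = 2 ->
  reflect (exists e1 e2, subseq [:: e1; e2] x /\ order_iso [:: e1; e2] p)
          (contains x p).
Proof.
move=> Hp; apply: (iffP (containsP x p)) => [[w [Hs Hi]]|[e1 [e2 H]]]; last by exists [:: e1; e2].
move: (Hi) => /andP [/eqP Hsz _]; rewrite Hp in Hsz.
case: w Hs Hi Hsz => [|e1 [|e2 [|]]] //= Hs Hi _.
by exists e1, e2.
Qed.

Lemma sub2_lt r u v : pairwise ltn r -> subseq [:: u; v] r -> u < v.
Proof. by move=> Hr /subseq_pairwise /(_ Hr) /=; rewrite andbT => /andP []. Qed.

Lemma sub3_tail (e1 e2 e3 t : nat) r : subseq [:: e1; e2; e3] (t :: r) -> subseq [:: e2; e3] r.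
Proof. by move=> /=; case: ifP => _ // /cons_subseq. Qed.

Definition T2 := [:: [:: 1; 3; 2]; [:: 3; 2; 1]].

Lemma avoids_T_sorted t r : pairwise ltn r -> avoids_all T2 (t :: r).
Proof.
move=> Hr; rewrite /avoids_all /= andbT.
apply/andP; split; apply/negP => /contains3P [] // e1 [e2 [e3 []]] /sub3_tail /(sub2_lt Hr).
  by rewrite iso132; lia.
by rewrite iso321; lia.
Qed.

Lemma sub3_push a t r e1 e2 e3 : pairwise ltn r ->
  subseq [:: e1; e2; e3] (a :: t :: r) -> e3 < e2 -> [/\ e1 = a, e2 = t & e3 \in r].
Proof.
move=> Hr /=; case: ifP => [/eqP -> | _] Hs H32; last first.
  by move: (sub2_lt Hr (sub3_tail Hs)); lia.
move: Hs; case: ifP => [/eqP -> | _] Hs; last by move: (sub2_lt Hr Hs); lia.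
by rewrite -sub1seq.
Qed.

Lemma avoids_T_push a t r : pairwise ltn r ->
  avoids_all T2 (a :: t :: r) = ~~ has (fun s => (s < t < a) || (a < s < t)) r.
Proof.
move=> Hr; rewrite /avoids_all /= andbT -negb_or; congr negb.
apply/idP/hasP.
- case/orP => /contains3P [] // e1 [e2 [e3 [Hs]]].
  + rewrite iso132 => /andP [H13 H32].
    case: (sub3_push Hr Hs H32) => ? ? H3; subst; exists e3 => //; lia.
  + rewrite iso321 => /andP [H32 H21].
    case: (sub3_push Hr Hs H32) => ? ? H3; subst; exists e3 => //; lia.
- move=> [s Hs /orP [] /andP [H1 H2]].
  + apply/orP; right; apply/contains3P => //; exists a, t, s; split.
      by rewrite /= !eqxx sub1seq.
    by rewrite iso321 H1 H2.
  + apply/orP; left; apply/contains3P => //; exists a, t, s; split.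
      by rewrite /= !eqxx sub1seq.
    by rewrite iso132 H1 H2.
Qed.

Lemma step_T_nil a out : push_step T2 a [::] out = ([:: a], out).
Proof. by simpl; try case: ifP. Qed.

Lemma step_T a t r out : pairwise ltn r ->
  push_step T2 a (t :: r) out =
  if has (fun s => (s < t < a) || (a < s < t)) r then (a :: r, rcons out t)
  else (a :: t :: r, out).
Proof.
move=> Hr.
have -> : push_step T2 a (t :: r) out = if avoids_all T2 (a :: t :: r) then (a :: t :: r, out)
   else push_step T2 a r (rcons out t) by [].
rewrite avoids_T_push //; case: has => //=.
case: r Hr => [|s r'] Hr; first by rewrite step_T_nil.
have -> : push_step T2 a (s :: r') (rcons out t) = if avoids_all T2 (a :: s :: r') then (a :: s :: r', rcons out t)
   else push_step T2 a r' (rcons (rcons out t) s) by [].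
by rewrite (avoids_T_sorted a Hr).
Qed.

Definition W := [:: [:: 2; 1]].

Lemma avoids_W a stk : pairwise ltn stk ->
  avoids_all W (a :: stk) = all (fun s => a <= s) stk.
Proof.
move=> Hs; rewrite /avoids_all /= andbT.
apply/idP/allP => [/negP Hc s Hin | Hall].
  rewrite leqNgt; apply/negP => Hlt; apply: Hc; apply/contains2P => //.
  by exists a, s; rewrite iso21 /= eqxx sub1seq.
apply/negP => /contains2P [] // e1 [e2 []].
rewrite iso21 /=; case: ifP => [/eqP -> | _] Hsub Hlt.
  by move: (Hall e2); rewrite -sub1seq => /(_ Hsub); lia.
by move: (sub2_lt Hs Hsub); lia.
Qed.

Lemma step_W_nil a out : push_step W a [::] out = ([:: a], out).
Proof. by simpl; try case: ifP. Qed.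

Lemma step_W_lemma (a : nat) (rest' stk out : seq nat) :
  pairwise ltn stk -> pairwise ltn out -> allrel ltn out stk -> a \notin stk ->
  (forall o, o \in out -> o < a) ->
  (forall o c, o \in out -> c \in rest' -> o < c) ->
  (forall b c, b \in stk -> c \in rest' -> ~~ ((c < b) && (b < a))) ->
  (forall c, c \in rest' -> c \notin stk) ->
  let so := push_step W a stk out in
  [/\ perm_eq (so.2 ++ so.1) (rcons (out ++ stk) a), pairwise ltn so.1,
      pairwise ltn so.2, allrel ltn so.2 so.1 &
      forall o c, o \in so.2 -> c \in rest' -> o < c].
Proof.
elim: stk out => [|b stk IH] out Hstk Hout Hos Ha Hoa Hor H231 Hcs.
  rewrite step_W_nil /= cats0; split => //.
  - by rewrite cats1.
  - by apply/allrelP => o y Ho; rewrite inE => /eqP ->; apply: Hoa.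
have Hstk0 := Hstk; rewrite /= in Hstk; case/andP: Hstk => Hb Hstk.
have -> : push_step W a (b :: stk) out = if avoids_all W (a :: b :: stk) then (a :: b :: stk, out)
   else push_step W a stk (rcons out b) by [].
rewrite (avoids_W a Hstk0) /=.
have Hab : a != b by move: Ha; rewrite inE negb_or => /andP [].
case: ifP => [/andP [Hle _] | Hnle].
  have Hlt : a < b by rewrite ltn_neqAle Hab Hle.
  rewrite /=; split => //.
  - by rewrite -cats1 -catA perm_cat2l cats1 perm_sym perm_rcons.
  - rewrite Hlt Hb Hstk /= andbT; apply/allP => s Hs.
    by apply: (ltn_trans Hlt); apply: (allP Hb).
  - rewrite allrel_consr; apply/andP; split => //.
    by apply/allP => o Ho; apply: Hoa.
have Hba : b < a.
  rewrite ltnNge leq_eqVlt (negbTE Hab) /=; apply/negP => Hlt.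
  move: Hnle; rewrite (ltnW Hlt) /=; have -> // : all (leq a) stk.
  by apply/allP => s Hs; apply: ltnW; apply: (ltn_trans Hlt (allP Hb s Hs)).
have Hcb : forall c, c \in rest' -> b < c.
  move=> c Hc; move: (H231 b c (mem_head _ _) Hc) (Hcs c Hc).
  rewrite inE negb_or => H /andP [Hcb _]; move: H; rewrite Hba andbT -leqNgt leq_eqVlt eq_sym.
  by rewrite (negbTE Hcb).
have := IH (rcons out b) Hstk _ _ _ _ _ _ _.
rewrite cat_rcons => H; apply: H.
- rewrite pairwise_rcons Hout andbT; apply/allP => o Ho.
  by move/allrelP: Hos => /(_ o b Ho (mem_head _ _)).
- apply/allrelP => o s; rewrite mem_rcons inE => /orP [/eqP -> | Ho] Hs.
    by apply: (allP Hb).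
  by move/allrelP: Hos => /(_ o s Ho); apply; rewrite inE Hs orbT.
- by move: Ha; rewrite inE negb_or => /andP [].
- by move=> o; rewrite mem_rcons inE => /orP [/eqP -> | /Hoa].
- move=> o c; rewrite mem_rcons inE => /orP [/eqP -> | Ho] Hc; first by apply: Hcb.
  by apply: Hor.
- by move=> b' c Hb' Hc; apply: H231 => //; rewrite inE Hb' orbT.
- by move=> c Hc; move: (Hcs c Hc); rewrite inE negb_or => /andP [].
Qed.

Definition avoid231 (y : seq nat) :=
  forall b a c, subseq [:: b; a; c] y -> ~~ ((c < b) && (b < a)).
Definition stW (so : seq nat * seq nat) a := push_step W a so.1 so.2.

Lemma perm_rcons2 (s1 s2 : seq nat) a : perm_eq s1 s2 -> perm_eq (rcons s1 a) (rcons s2 a).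
Proof. by rewrite -!cats1 perm_cat2r. Qed.

Lemma west_inv y : uniq y -> avoid231 y -> forall pre rest, y = pre ++ rest ->
  let so := foldl stW ([::], [::]) pre in
  [/\ perm_eq (so.2 ++ so.1) pre, pairwise ltn so.1, pairwise ltn so.2,
      allrel ltn so.2 so.1 & forall o c, o \in so.2 -> c \in rest -> o < c].
Proof.
move=> Hu H231; elim/last_ind => [|pre a IH] rest Hy; first by [].
rewrite cat_rcons in Hy.
case: (IH _ Hy); rewrite foldl_rcons.
set so := foldl stW _ pre; move=> Hp H1 H2 H12 Hr.
have Hu' := Hu; rewrite Hy cat_uniq /= negb_or in Hu'.
case/and3P: Hu' => _ /andP [Hapre Hrpre] _.
have Hsopre : forall e, e \in so.1 -> e \in pre.
  by move=> e He; rewrite -(perm_mem Hp) mem_cat He orbT.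
have := @step_W_lemma a rest so.1 so.2 H1 H2 H12 _ _ _ _ _.
rewrite /stW; move=> H; case: H.
- by apply/negP => /Hsopre; apply/negP.
- by move=> o Ho; apply: Hr; rewrite ?inE ?eqxx.
- by move=> o c Ho Hc; apply: Hr; rewrite // inE Hc orbT.
- move=> b c Hb Hc; apply: H231; rewrite Hy.
  rewrite -[[:: b; a; c]]/([:: b] ++ [:: a; c]); apply: cat_subseq.
    by rewrite sub1seq; apply: Hsopre.
  by rewrite /= eqxx sub1seq.
- move=> c Hc; apply/negP => /Hsopre Hcp; move/hasPn: Hrpre => /(_ c Hc).
  by rewrite Hcp.
move=> Hp' Hs1 Hs2 Hs12 Hsr; split => //.
by apply: (perm_trans Hp'); rewrite perm_rcons2.
Qed.

Lemma west_s_eq y : west_s y = (foldl stW ([::], [::]) y).2 ++ (foldl stW ([::], [::]) y).1.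
Proof. by rewrite /west_s /sT; case: foldl. Qed.

Lemma west_sorted y : uniq y -> avoid231 y ->
  pairwise ltn (west_s y) /\ perm_eq (west_s y) y.
Proof.
move=> Hu H; case: (west_inv Hu H (esym (cats0 y))) => Hp H1 H2 H12 _.
rewrite west_s_eq; split => //.
by rewrite pairwise_cat H12 H1 H2.
Qed.

Lemma subseq_skip (a : nat) s o z : subseq (a :: s) (o ++ z) -> a \notin o -> subseq (a :: s) z.
Proof.
elim: o => [|u o IH] //= Hs; rewrite inE negb_or => /andP [Hau Hao].
by apply: IH => //; move: Hs; rewrite (negbTE Hau).
Qed.

Lemma avoid231_final out t r :
  pairwise (fun u v => v < u) out -> pairwise ltn r ->
  (forall r1 r', r = r1 :: r' -> r1 < t -> forall v, v \in out -> ~~ ((r1 < v) && (v < t))) ->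
  avoid231 (out ++ t :: r).
Proof.
elim: out => [|v out IH] Hout Hr HI b a c /=.
  by move=> /sub3_tail /(sub2_lt Hr) Hac; apply/negP => /andP [] /=; lia.
case/andP: Hout => Hv Hout.
case: ifP => [/eqP Hbv | _]; last first.
  apply: IH => // r1 r' Hr1 Hlt w Hw; apply: (HI r1 r') => //.
  by rewrite inE Hw orbT.
subst b => Hs; apply/negP => /andP [Hcv Hva].
have Hao : a \notin out.
  apply/negP => Ha; move: (allP Hv a Ha) => /=; lia.
move: (subseq_skip Hs Hao) => /=; case: ifP => [/eqP Hat | _] Hs2; last first.
  by move: (sub2_lt Hr Hs2); lia.
subst a; move: Hs2; rewrite sub1seq.
clear IH Hs; case: r Hr HI => [|r1 r'] // Hr HI Hc.
have Hr1c : r1 <= c.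
  move: Hc; rewrite inE => /orP [/eqP -> // | Hc].
  by move: Hr => /= /andP [/allP /(_ c Hc) /ltnW].
have Hr1t : r1 < t by lia.
by move: (HI r1 r' erefl Hr1t v (mem_head _ _)); rewrite (leq_ltn_trans Hr1c Hcv) Hva.
Qed.

Lemma no123_cat x q1 q2 w v c :
  (forall e1 e2 e3, subseq [:: e1; e2; e3] x -> ~~ ((e1 < e2) && (e2 < e3))) ->
  x = q1 ++ q2 -> subseq [:: w; v] q1 -> c \in q2 -> w < v -> c <= v.
Proof.
move=> H Hx Hs Hc Hwv.
have Hs3 : subseq [:: w; v; c] x.
  by rewrite Hx -[[:: w; v; c]]/([:: w; v] ++ [:: c]); apply: cat_subseq; rewrite ?sub1seq.
by move: (H _ _ _ Hs3); rewrite Hwv /= -leqNgt.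
Qed.

Lemma subseq_rcons_neq (w v t : nat) p : subseq [:: w; v] (rcons p t) -> v != t -> subseq [:: w; v] p.
Proof.
elim: p => [|u p IH]; first by move=> /size_subseq.
rewrite /=; case: ifP => [_ | _] Hs Hvt; last by apply: IH.
by move: Hs; rewrite !sub1seq mem_rcons inE (negbTE Hvt).
Qed.

Lemma sub2_rcons (s t : nat) p : s \in p -> subseq [:: s; t] (rcons p t).
Proof.
by move=> Hs; rewrite -cats1 -[[:: s; t]]/([:: s] ++ [:: t]) cat_subseq // sub1seq.
Qed.

Lemma star_contra x p' t a rest r1 : avoids_132star x ->
  x = p' ++ t :: a :: rest -> r1 \in p' -> r1 < a -> t = a.+1 -> False.
Proof.
move=> H Hx Hr1 Hlt Ht; apply: (H (index r1 p') (size p')).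
have Hi : index r1 p' < size p' by rewrite index_mem.
rewrite /occ_132star Hx size_cat /= !nth_cat Hi ltnn subnn.
have -> : ((size p').+1 < size p') = false by rewrite ltnNge leqnSn.
rewrite subSnn nth_index //=; split => //; split; first lia.
by split.
Qed.

Definition stT (so : seq nat * seq nat) a := push_step T2 a so.1 so.2.

Definition InvT (pre : seq nat) (so : seq nat * seq nat) :=
  [/\ perm_eq (so.2 ++ so.1) pre,
      (forall p' t, pre = rcons p' t -> exists2 r, so.1 = t :: r & pairwise ltn r),
      (forall v, v \in so.2 -> exists2 w, w < v & subseq [:: w; v] pre),
      pairwise (fun u v => v < u) so.2 &
      (forall t r1 r', so.1 = t :: r1 :: r' -> r1 < t ->
         forall v, v \in so.2 -> ~~ ((r1 < v) && (v < t)))].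

Lemma perm_push (out s : seq nat) a : perm_eq (out ++ a :: s) (rcons (out ++ s) a).
Proof. by rewrite -cats1 -catA perm_cat2l cats1 perm_sym perm_rcons. Qed.

Lemma main_inv n x : uniq x ->
  (forall e1 e2 e3, subseq [:: e1; e2; e3] x -> ~~ ((e1 < e2) && (e2 < e3))) ->
  avoids_132star x -> (forall v, (v \in x) = (0 < v <= n)) ->
  forall pre rest, x = pre ++ rest -> InvT pre (foldl stT ([::], [::]) pre).
Proof.
move=> Hu H123 Hstar Hval.
elim/last_ind => [|pre a IH] rest Hx.
  split => //=; by case.
rewrite cat_rcons in Hx; have := IH _ Hx; rewrite foldl_rcons.
case: (foldl stT _ pre) => stk out [] /= Hp Hsh Hw Hpw HI; rewrite /stT /=.
have Hu' := Hu; rewrite Hx cat_uniq /= negb_or in Hu'.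
case/and3P: Hu' => Hupre /andP [Hapre Hrpre] _.
have [Hpre|[p' [t Hpre]]] : pre = [::] \/ exists p' t, pre = rcons p' t.
  by case/lastP: pre {IH Hx Hp Hsh Hw Hupre Hapre Hrpre} => [|p' t]; [left | right; exists p', t].
  subst pre; move: (perm_size Hp); case: out Hp {Hw Hpw HI} => [|o out]; case: stk Hsh => [|s stk] // Hsh Hp _.
  rewrite step_T_nil; split => //=.
  move=> p' t /(congr1 (last 0)); rewrite last_rcons /= => <-; by exists [::].
subst pre; case: (Hsh p' t erefl) => r Hstk Hr; subst stk.
have Hx' : x = p' ++ t :: a :: rest by rewrite Hx cat_rcons.
have Hust : uniq (out ++ t :: r) by rewrite (perm_uniq Hp).
have Hinpre : forall e, e \in out ++ t :: r -> e \in rcons p' t by move=> e; rewrite (perm_mem Hp).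
move: (Hust); rewrite cat_uniq /= => /and3P [Huo Hh /andP [Htr Hur]].
have Hto : t \notin out by apply/negP => Ht; move: Hh; rewrite negb_or => /andP [/negP []].
have Hout_p : forall v, v \in out -> v \in p'.
  move=> v Hv; move: (Hinpre v); rewrite mem_cat Hv mem_rcons inE => /(_ erefl) /orP [/eqP Hvt|//].
  by subst v; rewrite Hv in Hto.
have Hr_p : forall v, v \in r -> v \in p'.
  move=> v Hv; move: (Hinpre v); rewrite mem_cat inE Hv !orbT mem_rcons inE => /(_ erefl) /orP [/eqP Hvt|//].
  by subst v; rewrite Hv in Htr.
have Hat : a != t by apply/negP => /eqP Hat; move: Hapre; rewrite Hat mem_rcons mem_head.
have Hnotp : forall v, v \in p' -> a != v.
  by move=> v Hv; apply/negP => /eqP Hav; move: Hapre; rewrite Hav mem_rcons inE Hv orbT.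
have Hgt_a : forall v, v \in out -> a < v.
  move=> v Hv; case: (Hw v Hv) => w Hwv Hs.
  have := no123_cat H123 Hx Hs (mem_head _ _) Hwv.
  by rewrite leq_eqVlt (negbTE (Hnotp v (Hout_p v Hv))).
change (InvT (rcons (rcons p' t) a) (push_step T2 a (t :: r) out)); rewrite step_T //; case: ifP => Hhas.
- case/hasP: Hhas => s Hs /orP [/andP [Hst Hta] | /andP [Has Hst]].
    have := no123_cat H123 Hx (sub2_rcons t (Hr_p s Hs)) (mem_head _ _) Hst.
    by rewrite leqNgt Hta.
  split => /=.
  + apply: (perm_trans _ (perm_rcons2 a Hp)).
    by rewrite -!cats1 -!catA perm_cat2l /= perm_cons cats1 perm_sym perm_rcons.
  + by move=> q t' /(congr1 (last 0)); rewrite !last_rcons => <-; exists r.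
  + move=> v; rewrite mem_rcons inE => /orP [/eqP -> | Hv].
      exists s => //.
      by apply: subseq_trans (sub2_rcons t (Hr_p s Hs)) (subseq_rcons _ _).
    case: (Hw v Hv) => w Hwv Hsw; exists w => //.
    by apply: subseq_trans Hsw (subseq_rcons _ _).
  + rewrite pairwise_rcons Hpw andbT; apply/allP => v Hv /=.
    case: (Hw v Hv) => w Hwv Hsw.
    have Hvt : v != t by apply/negP => /eqP Hvt; rewrite -Hvt Hv in Hto.
    have := no123_cat H123 Hx' (subseq_rcons_neq Hsw Hvt) (mem_head _ _) Hwv.
    by rewrite leq_eqVlt eq_sym (negbTE Hvt).
  + move=> t0 r1 r' [Ht0 Hr1] Hlt v; rewrite mem_rcons inE => /orP [/eqP -> | Hv].
      by apply/negP => /andP [_ Hta]; move: Ht0 Has Hst Hta; clear; lia.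
    by rewrite -Ht0; apply/negP => /andP [_]; rewrite ltnNge (ltnW (Hgt_a v Hv)).
- have Hptr : pairwise ltn (t :: r).
    case Er: r => [|r1 r''] //.
    have Hr1r : r1 \in r by rewrite Er mem_head.
    suff Htr1 : t < r1.
      move: (Hr); rewrite Er /= => /andP [Hall Hpr]; rewrite Htr1 Hall Hpr /= ?andbT.
      by apply/allP => s Hs; apply: (ltn_trans Htr1); apply: (allP Hall).
    have Hr1t : r1 != t by apply/negP => /eqP Hr1t; rewrite -Hr1t Hr1r in Htr.
    case: (ltngtP t r1) => // [Hlt | Heq]; last by rewrite Heq eqxx in Hr1t.
    move/hasPn: Hhas => Hh1; move: (Hh1 r1 Hr1r); rewrite negb_or Hlt /= => /andP [Hta Har].
    have Hat' : a < t by rewrite ltn_neqAle Hat; move: Hta; clear; lia.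
    have Hra : r1 < a.
      by move: Har (Hnotp r1 (Hr_p r1 Hr1r)); clear; rewrite andbT; lia.
    case: (ltngtP a.+1 t) => [Hvt | Hvt | Hvt]; last first.
    + by apply: False_ind; apply: (star_contra Hstar Hx' (Hr_p r1 Hr1r) Hra).
    + by move: Hvt Hat'; clear; lia.
    + have Htx : t \in x by rewrite Hx' mem_cat mem_head orbT.
      have Hvx : a.+1 \in x.
        by rewrite Hval /=; move: Htx; rewrite Hval => /andP [_ Htn]; apply: leq_trans Htn.
      move: Hvx; rewrite Hx mem_cat inE (gtn_eqF (ltnSn a)) /= => /orP [Hvp | Hvr].
      * move: Hvp; rewrite -(perm_mem Hp) mem_cat inE => /or3P [Hvo | /eqP Hvt' | Hvr].
        -- have Hs2 : t :: r = t :: r1 :: r'' by rewrite Er.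
           move: (HI t r1 r'' Hs2 Hlt _ Hvo); rewrite Hvt andbT.
           by rewrite (ltn_trans Hra (ltnSn a)).
        -- by rewrite Hvt' ltnn in Hvt.
        -- by move: (Hh1 _ Hvr); rewrite ltnSn Hvt !andbT orbT.
      * have Hx2 : x = rcons (rcons p' t) a ++ rest by rewrite cat_rcons.
        have Hr1in : r1 \in rcons p' t by rewrite mem_rcons inE (Hr_p r1 Hr1r) orbT.
        have := no123_cat H123 Hx2 (sub2_rcons a Hr1in) Hvr Hra.
        by rewrite ltnn.
  split => /=.
  + exact: (perm_trans (perm_push out (t :: r) a) (perm_rcons2 a Hp)).
  + by move=> q t' /(congr1 (last 0)); rewrite !last_rcons => <-; exists (t :: r).
  + move=> v Hv; case: (Hw v Hv) => w Hwv Hsw; exists w => //.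
    by apply: subseq_trans Hsw (subseq_rcons _ _).
  + exact: Hpw.
  + move=> t0 r1 r' [<- <- _] Hta v Hv; apply/negP => /andP [_ Hva].
    by move: (Hgt_a v Hv) Hva; clear; lia.
Qed.

Lemma sT_eq x : sT T2 x = (foldl stT ([::], [::]) x).2 ++ (foldl stT ([::], [::]) x).1.
Proof. by rewrite /sT; case: foldl. Qed.

Theorem proposition3p6 (n : nat) (x : seq nat) :
  is_perm n x ->
  ~~ contains x [:: 1; 2; 3] ->
  avoids_132star x ->
  Sort_n n [:: 1; 3; 2] [:: 3; 2; 1] x.
Proof.
move=> Hperm H123c Hstar; split => //.
have Hu : uniq x by rewrite (perm_uniq Hperm) iota_uniq.
have Hval : forall v, (v \in x) = (0 < v <= n).
  by move=> v; rewrite (perm_mem Hperm) mem_iota add1n ltnS.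
have H123 : forall e1 e2 e3, subseq [:: e1; e2; e3] x -> ~~ ((e1 < e2) && (e2 < e3)).
  move=> e1 e2 e3 Hs; apply/negP => Hlt; move/negP: H123c; apply; apply/contains3P => //.
  by exists e1, e2, e3; rewrite iso123.
change (west_s (sT T2 x) = iota 1 n); rewrite sT_eq.
have := main_inv Hu H123 Hstar Hval (esym (cats0 x)).
case: (foldl stT _ x) => stk out [] /= Hp Hsh Hw Hpw HI.
have Hfin : forall y, perm_eq y x -> uniq y -> avoid231 y -> west_s y = iota 1 n.
  move=> y Hyx Huy Hy; case: (west_sorted Huy Hy) => Hs Hpy.
  apply: (sorted_eq leq_trans anti_leq); first 2 last.
  - exact: (perm_trans Hpy (perm_trans Hyx Hperm)).
  - by move: (pairwise_sorted Hs); rewrite ltn_sorted_uniq_leq => /andP [].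
  - exact: iota_sorted.
have Huy : uniq (out ++ stk) by rewrite (perm_uniq Hp).
apply: Hfin => //.
have [Hx0|[p' [t Hx1]]] : x = [::] \/ exists p' t, x = rcons p' t.
  by case/lastP: (x) => [|p' t]; [left | right; exists p', t].
  have Hnil : out ++ stk = [::] by apply/eqP; rewrite -size_eq0 (perm_size Hp) Hx0.
  by move=> b a c; rewrite Hnil.
case: (Hsh p' t Hx1) => r Hstk Hr; subst stk.
apply: avoid231_final => // r1 r' Hr1 Hlt v Hv.
by apply: (HI t r1 r') => //; rewrite Hr1.
Qed.
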